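(* For a planted $K$-path, the likelihood ratio is \[ L(G)=\frac{\mathbb{P}_1(G)}{\mathbb{P}_0(G)}=\frac{1}{n(n-1)\cdots(n-K+1)}\,\bigl|\{K\text{-paths in }G\}\bigr|\,\Bigl(\frac{\lambda}{n}\Bigr)^{-K+1}. \] Moreover $\mathbb{E}_0(L^2)=\mathbb{E}_0(x^S)$, where $x=n/\lambda$ and $S$ is the number of edges common to the $K$-path $(1-2-\cdots-K)$ and a $K$-path $\pi$ chosen uniformly at random among the $n(n-1)\cdots(n-K+1)$ possible $K$-paths on node set $[n]$.
   Context: Model: $n$ nodes, $\lambda>0$. $\mathbb{P}_0$: $G\sim\mathcal G(n,\lambda/n)$. $\mathbb{P}_1$: $G=G_0\cup G'$ with $G_0\sim\mathcal G(n,\lambda/n)$ and $G'$ the image of the path $1-2-\cdots-K$ under a uniformly random injection $[K]\to[n]$ independent of $G_0$. An ordered set $(i_1,\dots,i_K)$ of $K$ distinct nodes of $[n]$ is a $K$-path in $G$ if the edges $(i_\ell,i_{\ell+1})$, $\ell=1,\dots,K-1$, are all present in $G$; $K$-paths are counted as ordered sequences. $\mathbb{E}_0$ is expectation under $\mathbb{P}_0$. *)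

(* Defs.v *)
From mathcomp Require Import all_boot all_order all_algebra.
Set Implicit Arguments. Unset Strict Implicit. Unset Printing Implicit Defensive.
Import Order.TTheory GRing.Theory Num.Theory.
Local Open Scope ring_scope.

Definition pairs (n : nat) : {set {set 'I_n}} := [set e : {set 'I_n} | #|e| == 2%N].
Definition graphs (n : nat) : {set {set {set 'I_n}}} := powerset (pairs n).

Definition P0 {R : realFieldType} (n : nat) (p : R) (G : {set {set 'I_n}}) : R :=
  \prod_(e in pairs n) (if e \in G then p else 1 - p).

(* Ordered sequences of K distinct nodes = injections 'I_K -> 'I_n. *)
Definition injs (n K : nat) : {set {ffun 'I_K -> 'I_n}} := [set f : {ffun 'I_K -> 'I_n} | injectiveb f].

Definition pedges (n K : nat) (f : 'I_K -> 'I_n) : {set {set 'I_n}} :=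
  [set [set f ij.1; f ij.2] | ij in [set ij : 'I_K * 'I_K | (nat_of_ord ij.2 == (nat_of_ord ij.1).+1)%N]].

Definition nKpaths (n K : nat) (G : {set {set 'I_n}}) : nat :=
  #|[set f in injs n K | pedges f \subset G]|.

(* Planted model P1: G = G0 \cup image of path 1-...-K under a uniform random
   injection, G0 ~ G(n,p) independent. *)
Definition P1 {R : realFieldType} (n K : nat) (p : R) (G : {set {set 'I_n}}) : R :=
  (#|injs n K|%:R)^-1 *
  \sum_(f in injs n K) \sum_(G0 in graphs n)
     P0 p G0 * (G0 :|: pedges f == G)%:R.

Definition LR {R : realFieldType} (n K : nat) (p : R) (G : {set {set 'I_n}}) : R :=
  P1 K p G / P0 p G.

Definition E0 {R : realFieldType} (n : nat) (p : R) (X : {set {set 'I_n}} -> R) : R :=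
  \sum_(G in graphs n) P0 p G * X G.

(* Edges of the fixed path 1-2-...-K, placed on the first K nodes. *)
Definition path0 (n K : nat) : {set {set 'I_n}} :=
  [set [set ab.1; ab.2] | ab in [set ab : 'I_n * 'I_n | (nat_of_ord ab.2 == (nat_of_ord ab.1).+1)%N && (nat_of_ord ab.2 < K)%N]].

Definition Scommon (n K : nat) (f : 'I_K -> 'I_n) : nat := #|path0 n K :&: pedges f|.

Definition Eunif {R : realFieldType} (n K : nat) (Y : {ffun 'I_K -> 'I_n} -> R) : R :=
  (#|injs n K|%:R)^-1 * \sum_(f in injs n K) Y f.

(* Main.v *)
Require Import Defs.
From mathcomp Require Import all_boot all_order all_algebra.
From mathcomp Require Import ring zify lra.
Set Implicit Arguments. Unset Strict Implicit. Unset Printing Implicit Defensive.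
Import Order.TTheory GRing.Theory Num.Theory.
Local Open Scope ring_scope.

Lemma sum_powerset (R : realFieldType) (T : finType) (A : {set T}) (a b : T -> R) :
 \sum_(S in powerset A) \prod_(e in A) (if e \in S then a e else b e) = \prod_(e in A) (a e + b e).
Proof.
have -> : \prod_(e in A) (a e + b e) = \prod_(e in A) \sum_(x : bool) (if x then a e else b e).
  by apply: eq_bigr => e _; rewrite big_bool.
rewrite (big_distr_big false) /=.
rewrite (reindex_onto (fun f : {ffun T -> bool} => [set x | f x]) (fun S => [ffun x => x \in S])) /=; last first.
  by move=> S _; apply/setP => x; rewrite !inE ffunE.
apply: eq_big => [f|f _].
  rewrite powersetE; apply/andP/pfamilyP => [[/subsetP H /eqP <-]|[H1 H2]].
    split => [|x _]; last by [].
    by apply/subsetP => x; rewrite !inE ffunE inE => fx; apply: H; rewrite inE; case: (f x) fx.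
  split; first by apply/subsetP => x; rewrite inE => fx; apply: (subsetP H1); rewrite !inE fx.
  by apply/eqP/ffunP => x; rewrite ffunE inE.
by apply: eq_bigr => e _; rewrite inE.
Qed.

Lemma prod_indic (R : realFieldType) (T : finType) (A : {pred T}) (q : pred T) :
  \prod_(i in A) ((q i)%:R : R) = ([forall i in A, q i])%:R.
Proof.
case: (pickP [pred i | (i \in A) && ~~ q i]) => [i /andP[Ai nqi] | none].
  rewrite (bigD1 i) //= (negbTE nqi) mul0r.
  case: forall_inP => // H; by rewrite H in nqi.
have H : [forall i in A, q i].
  apply/forall_inP => i Ai; move: (none i) => /=; rewrite Ai /=; by case: (q i).
rewrite H big1 // => i Ai; move/forall_inP: H => H; by rewrite H.
Qed.

Lemma sum_P0 (R : realFieldType) n (p : R) (c : {set 'I_n} -> bool -> R) :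
  \sum_(G in graphs n) P0 p G * \prod_(e in pairs n) c e (e \in G)
  = \prod_(e in pairs n) (p * c e true + (1 - p) * c e false).
Proof.
rewrite -sum_powerset /graphs; apply: eq_bigr => G _.
rewrite /P0 -big_split /=; apply: eq_bigr => e _; by case: (e \in G).
Qed.

Lemma subset_prod (R : realFieldType) n (E G : {set {set 'I_n}}) :
  E \subset pairs n ->
  ((E \subset G)%:R : R) = \prod_(e in pairs n) (if e \in E then (e \in G)%:R else 1).
Proof.
move=> HE.
rewrite (eq_bigr (fun e => ((e \in E) ==> (e \in G))%:R)); last first.
  by move=> e _; case: (e \in E); case: (e \in G).
rewrite prod_indic; congr ((nat_of_bool _)%:R); apply/subsetP/forall_inP => H x.
  by move=> _; apply/implyP; exact: H.
by move=> xE; exact: (implyP (H x (subsetP HE x xE))).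
Qed.

Lemma pow_card (R : realFieldType) n (p : R) (E : {set {set 'I_n}}) :
  E \subset pairs n -> p ^+ #|E| = \prod_(e in pairs n) (if e \in E then p else 1).
Proof.
move=> HE; rewrite -big_mkcondr /= -prodr_const.
apply: eq_bigl => e; apply/idP/andP => [eE|[]//]; split => //; exact: (subsetP HE).
Qed.

Lemma marg (R : realFieldType) n (p : R) (E : {set {set 'I_n}}) :
  E \subset pairs n ->
  \sum_(G in graphs n) P0 p G * (E \subset G)%:R = p ^+ #|E|.
Proof.
move=> HE.
transitivity (\sum_(G in graphs n) P0 p G *
   \prod_(e in pairs n) (fun e b => if e \in E then b%:R else 1) e (e \in G)).
  by apply: eq_bigr => G _; rewrite (subset_prod _ _ HE).
rewrite (sum_P0 p (fun e b => if e \in E then b%:R else 1)) (pow_card _ HE); apply: eq_bigr => e _.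
by case: (e \in E) => /=; ring.
Qed.

Lemma union_eq n (G0 E G : {set {set 'I_n}}) :
  G0 \subset pairs n -> E \subset pairs n -> G \subset pairs n ->
  (G0 :|: E == G) = [forall e in pairs n, ((e \in G0) || (e \in E)) == (e \in G)].
Proof.
move=> H0 HE HG; apply/eqP/forall_inP => [<- e _| H]; first by rewrite inE.
apply/setP => e; rewrite inE; case Pe: (e \in pairs n); first exact/eqP/H.
have N0 : e \notin G0 by apply: contraFN Pe; exact: (subsetP H0).
have NE : e \notin E by apply: contraFN Pe; exact: (subsetP HE).
have NG : e \notin G by apply: contraFN Pe; exact: (subsetP HG).
by rewrite (negbTE N0) (negbTE NE) (negbTE NG).
Qed.

Lemma union_sum (R : realFieldType) n (p : R) (E G : {set {set 'I_n}}) :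
  E \subset pairs n -> G \subset pairs n ->
  (\sum_(G0 in graphs n) P0 p G0 * (G0 :|: E == G)%:R) * p ^+ #|E|
  = (E \subset G)%:R * P0 p G.
Proof.
move=> HE HG.
transitivity ((\sum_(G0 in graphs n) P0 p G0 *
   \prod_(e in pairs n) (fun e b => ((b || (e \in E)) == (e \in G))%:R) e (e \in G0)) * p ^+ #|E|).
  congr (_ * _); apply: eq_bigr => G0; rewrite /graphs powersetE => H0.
  by rewrite prod_indic union_eq.
rewrite (sum_P0 p (fun e b => ((b || (e \in E)) == (e \in G))%:R)) (pow_card _ HE) (subset_prod _ G HE) /P0 -!big_split /=.
apply: eq_bigr => e _.
by case: (e \in E); case: (e \in G) => /=; ring.
Qed.

Lemma cardD (K : nat) :
  #|[set ij : 'I_K.+1 * 'I_K.+1 | (nat_of_ord ij.2 == (nat_of_ord ij.1).+1)%N]| = K.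
Proof.
pose g (i : 'I_K) : 'I_K.+1 * 'I_K.+1 := (inord i, inord i.+1).
have ginj : injective g.
  move=> i j /eqP; rewrite xpair_eqE => /andP[/eqP h _]; apply: val_inj.
  by move: (congr1 (@nat_of_ord _) h); rewrite /= !inordK // ltnS ltnW.
have -> : [set ij : 'I_K.+1 * 'I_K.+1 | (nat_of_ord ij.2 == (nat_of_ord ij.1).+1)%N] = g @: [set: 'I_K].
  apply/setP => [[a b]]; rewrite inE /=; apply/idP/imsetP => [/eqP hb | [i _ [-> ->]]].
    have aK : (a < K)%N by rewrite -ltnS -hb ltn_ord.
    exists (Ordinal aK); first by rewrite inE.
    by congr (_, _); apply: val_inj; rewrite /= inordK // hb ?inordK // ltnS // ltnW.
  by rewrite /= (inordK (ltnW (ltn_ord i))) inordK // ltnS.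
by rewrite card_imset // cardsT card_ord.
Qed.

Lemma pedges_pairs n K (f : 'I_K -> 'I_n) : injective f -> pedges f \subset pairs n.
Proof.
move=> finj; apply/subsetP => e /imsetP [[a b]]; rewrite inE /= => /eqP hb ->.
have ab : a != b by apply/eqP => hab; move: hb; rewrite hab; lia.
by rewrite inE cards2 (inj_eq finj) ab.
Qed.

Lemma card_pedges n K (f : 'I_K.+1 -> 'I_n) : injective f -> #|pedges f| = K.
Proof.
move=> finj; rewrite /pedges card_in_imset ?cardD //.
move=> [a1 b1] [a2 b2]; rewrite !inE /= => /eqP h1 /eqP h2 /setP E.
have m1 := E (f a1); have m2 := E (f b1).
rewrite !inE !eqxx /= !(inj_eq finj) orbT in m1 m2.
move/esym: m1 => /orP[] /eqP e1; move/esym: m2 => /orP[] /eqP e2.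
- by move/(congr1 (@nat_of_ord _)): e1; move/(congr1 (@nat_of_ord _)): e2; lia.
- by rewrite e1 e2.
- by move/(congr1 (@nat_of_ord _)): e1; move/(congr1 (@nat_of_ord _)): e2; lia.
- by move/(congr1 (@nat_of_ord _)): e1; move/(congr1 (@nat_of_ord _)): e2; lia.
Qed.

Lemma pedges_comp n K (sigma : 'I_n -> 'I_n) (g h : 'I_K -> 'I_n) :
  (forall i, h i = sigma (g i)) -> pedges h = (fun e : {set 'I_n} => sigma @: e) @: pedges g.
Proof.
move=> hE; rewrite /pedges -imset_comp; apply: eq_imset => ij /=.
by rewrite !hE imsetU1 imset_set1.
Qed.

Lemma path0E n K (HKn : (K <= n)%N) : path0 n K = pedges (fun i : 'I_K => widen_ord HKn i).
Proof.
rewrite /path0 /pedges.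
pose w2 (ij : 'I_K * 'I_K) : 'I_n * 'I_n := (widen_ord HKn ij.1, widen_ord HKn ij.2).
rewrite (_ : [set ab : 'I_n * 'I_n | _] = w2 @: [set ij : 'I_K * 'I_K | (nat_of_ord ij.2 == (nat_of_ord ij.1).+1)%N]); last first.
  apply/setP => [[a b]]; rewrite inE /=; apply/andP/imsetP => [[/eqP hb hbK] | [[i j]]].
    have haK : (a < K)%N by rewrite ltnW // -hb.
    exists (Ordinal haK, Ordinal hbK); first by rewrite inE /= hb.
    by apply/eqP; rewrite xpair_eqE -!val_eqE /= !eqxx.
  move=> Hin [-> ->]; move: Hin; rewrite in_set /= => /eqP hj.
  by move: (ltn_ord j); rewrite /= hj => ?; split.
by rewrite -imset_comp.
Qed.

Lemma extend_inj n K (HKn : (K <= n)%N) (x0 : 'I_n) (f : 'I_K -> 'I_n) : injective f ->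
  exists sigma : 'I_n -> 'I_n, injective sigma /\ forall i : 'I_K, f i = sigma (widen_ord HKn i).
Proof.
move=> finj.
pose s := map f (enum 'I_K) ++ [seq x <- enum 'I_n | x \notin codom f].
have us : uniq s.
  rewrite cat_uniq map_inj_uniq // enum_uniq filter_uniq ?enum_uniq // andbT /=.
  apply/hasPn => x; rewrite mem_filter => /andP[nx _]; by rewrite -codomE.
have ss : size s = n.
  move/card_uniqP: us => <-; rewrite -[RHS]card_ord; apply: eq_card => x.
  rewrite mem_cat -codomE mem_filter mem_enum andbT /=; by case: (x \in codom f).
exists (fun x => nth x0 s x); split.
  by move=> x y /eqP; rewrite nth_uniq ?ss ?ltn_ord // => /eqP; apply: val_inj.
move=> i /=; rewrite nth_cat size_map size_enum_ord ltn_ord.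
by rewrite (nth_map i) ?size_enum_ord ?ltn_ord // nth_ord_enum.
Qed.

Lemma sym_sum (R : realFieldType) n K (HKn : (K <= n)%N) (x0 : 'I_n) (F : nat -> R)
  (f : {ffun 'I_K -> 'I_n}) : f \in injs n K ->
  \sum_(g in injs n K) F #|pedges f :&: pedges g|
  = \sum_(g in injs n K) F #|path0 n K :&: pedges g|.
Proof.
rewrite inE => /injectiveP finj.
have [sigma [sinj sf]] := extend_inj HKn x0 finj.
have [sinv sK sKV] := injF_bij sinj.
pose h (g : {ffun 'I_K -> 'I_n}) := [ffun i => sigma (g i)].
rewrite (reindex h); last first.
  exists (fun g : {ffun 'I_K -> 'I_n} => [ffun i => sinv (g i)] : {ffun 'I_K -> 'I_n}) => g _; apply/ffunP => i; by rewrite !ffunE ?sK ?sKV.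
apply: eq_big => g.
  rewrite !inE; apply/injectiveP/injectiveP => H i j.
    by move=> e; apply: H; rewrite !ffunE e.
  by rewrite !ffunE => /sinj; apply: H.
move=> _.
rewrite (@pedges_comp _ _ sigma g (h g)); last by move=> i; rewrite ffunE.
rewrite (@pedges_comp _ _ sigma (fun i => widen_ord HKn i) f) // -path0E.
rewrite -imsetI; last by move=> A B _ _; apply: (imset_inj sinj).
by rewrite card_imset //; apply: (imset_inj sinj).
Qed.

Unset Implicit Arguments.
Set Strict Implicit.

Theorem lemma2 (R : realFieldType) (n K : nat) (lam : R)
  (Hlam0 : 0 < lam) (Hlamn : lam < n%:R) (HK1 : (1 <= K)%N) (HKn : (K <= n)%N) :
  let p := lam / n%:R in
  (forall G : {set {set 'I_n}}, G \in graphs n ->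
     LR K p G = ((n ^_ K)%:R)^-1 * (nKpaths K G)%:R * p ^- (K - 1)) /\
  E0 p (fun G : {set {set 'I_n}} => LR K p G ^+ 2)
    = Eunif (fun f : {ffun 'I_K -> 'I_n} => (n%:R / lam) ^+ Scommon f).
Proof.
move=> p.
have n0 : (0 < n)%N := leq_trans HK1 HKn.
pose x0 : 'I_n := Ordinal n0.
case: K HK1 HKn => [//|K] _ HKn.
have nR : 0 < n%:R :> R by rewrite ltr0n.
have p0 : 0 < p by rewrite divr_gt0.
have p1 : p < 1 by rewrite ltr_pdivrMr // mul1r.
have pn0 : p != 0 by rewrite gt_eqF.
have P0pos : forall G : {set {set 'I_n}}, 0 < P0 p G.
  by move=> G; rewrite /P0; apply: prodr_gt0 => e _; case: ifP => _; rewrite ?subr_gt0.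
have N_eq : #|injs n K.+1| = n ^_ K.+1 by rewrite /injs card_inj_ffuns !card_ord.
have NR0 : ((n ^_ K.+1)%:R : R) != 0 by rewrite pnatr_eq0 -lt0n ffact_gt0.
have Ecard : forall f, f \in injs n K.+1 -> #|pedges f| = K.
  by move=> f; rewrite inE => /injectiveP; apply: card_pedges.
have Epairs : forall f, f \in injs n K.+1 -> pedges f \subset pairs n.
  by move=> f; rewrite inE => /injectiveP; apply: pedges_pairs.
have cnt : forall G : {set {set 'I_n}}, \sum_(f in injs n K.+1) ((pedges f \subset G)%:R : R) = (nKpaths K.+1 G)%:R.
  move=> G; rewrite -natr_sum; congr (_%:R).
  rewrite /nKpaths -sum1_card big_mkcond [RHS]big_mkcond /=; apply: eq_bigr => f _.
  by rewrite !inE; case: injectiveb; case: (pedges f \subset G).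
have part1 : forall G : {set {set 'I_n}}, G \in graphs n ->
     LR K.+1 p G = ((n ^_ K.+1)%:R)^-1 * (nKpaths K.+1 G)%:R * p ^- (K.+1 - 1).
  move=> G; rewrite /graphs powersetE => HG.
  have inner : forall f, f \in injs n K.+1 -> \sum_(G0 in graphs n) P0 p G0 * (G0 :|: pedges f == G)%:R
      = (pedges f \subset G)%:R * P0 p G / p ^+ K.
    move=> f hf; rewrite -(union_sum p (Epairs f hf) HG) (Ecard f hf) mulfK // expf_neq0 //.
  rewrite /LR /P1 (eq_bigr _ inner) -mulr_suml -mulr_suml cnt N_eq subn1 /=.
  have := P0pos G; rewrite lt0r => /andP[P0n0 _].
  field; by rewrite ?P0n0 ?NR0 ?expf_neq0.
split => //.
rewrite /E0 /Eunif.
under eq_bigr => G HG do rewrite (part1 G HG).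
rewrite subn1 /=.
pose c := (n ^_ K.+1)%:R^-1 * (p ^+ K)^-1 : R.
transitivity (c ^+ 2 * \sum_(G in graphs n) P0 p G * (nKpaths K.+1 G)%:R ^+ 2).
  rewrite mulr_sumr; apply: eq_bigr => G _; rewrite /c.
  move: (P0 p G) ((nKpaths K.+1 G)%:R : R) ((n ^_ K.+1)%:R^-1 : R) (p ^+ K) => a b c' d; ring.
have sq : \sum_(G in graphs n) P0 p G * (nKpaths K.+1 G)%:R ^+ 2 =
   \sum_(f in injs n K.+1) \sum_(g in injs n K.+1) p ^+ #|pedges f :|: pedges g|.
  under eq_bigr => G _ do rewrite -cnt expr2 big_distrlr /= mulr_sumr.
  rewrite exchange_big; apply: eq_bigr => f hf.
  under eq_bigr => G _ do rewrite mulr_sumr.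
  rewrite exchange_big; apply: eq_bigr => g hg.
  under eq_bigr => G _ do rewrite -natrM mulnb -subUset.
  by rewrite marg // subUset !Epairs.
rewrite sq.
transitivity ((n ^_ K.+1)%:R^-1 ^+ 2 * \sum_(f in injs n K.+1) \sum_(g in injs n K.+1)
    (p^-1) ^+ #|pedges f :&: pedges g|).
  rewrite /c exprMn -mulrA; congr (_ * _); rewrite mulr_sumr; apply: eq_bigr => f hf.
  rewrite mulr_sumr; apply: eq_bigr => g hg.
  have hab : p ^+ #|pedges f :|: pedges g| * p ^+ #|pedges f :&: pedges g| = p ^+ K * p ^+ K.
    by rewrite -!exprD cardsUI !Ecard.
  rewrite -[p ^+ #|pedges f :|: pedges g|](mulfK (expf_neq0 #|pedges f :&: pedges g| pn0)) hab exprVn.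
  have h1 := expf_neq0 K pn0; have h2 := expf_neq0 #|pedges f :&: pedges g| pn0.
  move: (p ^+ K) (p ^+ #|pedges f :&: pedges g|) h1 h2 => a b h1 h2.
  by field; rewrite h1 h2.
have SS : forall f, f \in injs n K.+1 -> \sum_(g in injs n K.+1) p^-1 ^+ #|pedges f :&: pedges g| = \sum_(g in injs n K.+1) p^-1 ^+ #|path0 n K.+1 :&: pedges g|.
  by move=> f hf; exact: (@sym_sum R n K.+1 HKn x0 (fun k => p^-1 ^+ k) f hf).
rewrite (eq_bigr _ SS) sumr_const N_eq invf_div /Scommon.
set S := \sum_(g in injs n K.+1) _.
rewrite -(mulr_natr S).
move: ((n ^_ K.+1)%:R : R) NR0 S => a h b.
by field; rewrite h.
Qed.
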